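(* Let $\Sigma$ be an alphabet, $n\ge2$, and $p$ an $n$-gram LM over $\Sigma$. There exists a hard attention transformer LM weakly equivalent to $p$ whose contextual representations (the vectors $x$ produced by the static encoding and by every head and layer) have dimension $O(n|\Sigma|)$, whose final representation $F(x^L)$ fed to the output matrix has dimension $O(|\Sigma|^{n-1})$, and such that, when processing a string $y\in\Sigma^*$, every entry of every contextual representation can be represented with $O(\log_2|y|)$ bits.
   Context: Let $\Sigma$ be a finite nonempty alphabet and let $\mathrm{EOS},\mathrm{BOS}\notin\Sigma$ be distinct symbols; put $\overline\Sigma=\Sigma\cup\{\mathrm{EOS}\}$ and $\underline\Sigma=\Sigma\cup\{\mathrm{BOS}\}$. A language model (LM) over $\Sigma$ is a probability distribution $p$ on $\Sigma^*$ given autoregressively by $p(y)=p(\mathrm{EOS}\mid y)\prod_{t=1}^{|y|}p(y_t\mid y_{<t})$, where each $p(\cdot\mid y_{<t})$ is a probability distribution on $\overline\Sigma$. Two LMs $p,q$ over $\Sigma$ are weakly equivalent if $p(y)=q(y)$ for all $y\in\Sigma^*$. For $n\ge2$, an $n$-gram LM is an LM such that, after left-padding every string with $n-1$ copies of $\mathrm{BOS}$, $p(y_t\mid y_{<t})=p(y_t\mid y_{t-n+1}\cdots y_{t-1})$ depends only on the history $y_{t-n+1}\cdots y_{t-1}\in\underline\Sigma^{\,n-1}$ (the last $n-1$ symbols of the padded prefix); the distributions on $\overline\Sigma$ assigned to the histories are arbitrary (probabilities may be $0$). Transformers. A transformer of width $D$ processes a string $w=w_1\cdots w_T$ over $\underline\Sigma$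 (for an LM, the prefix $y_{<t}$ left-padded with $n-1$ copies of BOS) as follows. A static encoding gives $x^0_j=r(w_j,j)\in\mathbb R^D$ for a function $r:\underline\Sigma\times\mathbb N\to\mathbb R^D$. An attention head with query, key, value, output functions $Q,K,V,O:\mathbb R^D\to\mathbb R^D$, scoring function $f:\mathbb R^D\times\mathbb R^D\to\mathbb R$ and normalization function $\pi$ maps $(x_1,\dots,x_T)$ to $(z_1,\dots,z_T)$ where, for each position $s$, $q_s=Q(x_s)$, $k_j=K(x_j)$, $v_j=V(x_j)$, $\sigma=\pi(f(q_s,k_1),\dots,f(q_s,k_s))$ (a probability vector), $a_s=\sum_{j=1}^s\sigma_jv_j+x_s$, $z_s=O(a_s)+a_s$. A layer with $H$ heads applies $H$ heads to the same input and maps the concatenation of the $H$ outputs at each position back to $\mathbb R^D$ with a head-combining function $\mathcal H:\mathbb R^{HD}\to\mathbb R^D$; an $L$-layer transformer composes $L$ layers after $r$. Given a final function $F:\mathbb R^D\to\mathbb R^D$ and an output matrix $E\in(\mathbb R\cup\{-\infty\})^{|\overline\Sigma|\times D}$ (with $\exp(-\infty)=0$), the transformer LM sets $p(y_t\mid y_{<t})=\mathrm{softmax}(E\,F(x^L))_{y_t}$, where $x^L$ is the last-layer representation at the last position of the padded prefix $y_{<t}$. In this definition $r,Q,K,V,O,f,\mathcal H,F$ are arbitrary functions. Hard attention means $\pi=\mathrm{hardmax}$, where $\mathrm{hardmax}(x)_d=1/m$ if $d\in\arg\max x$ with $m=|\arg\max x|$, and $0$ otherwise. Sparse attention means $\pi=\mathrm{sparsemax}$,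 $\mathrm{sparsemax}(x)=\arg\min_{p\in\Delta}\|p-x\|_2^2$ over the probability simplex $\Delta$. *)

(* Defs.v *)
From HB Require Import structures.
From mathcomp Require Import all_boot all_order all_algebra.
From mathcomp Require Import reals constructive_ereal sequences.

Unset Implicit Arguments.
Unset Strict Implicit.
Unset Printing Implicit Defensive.

Import Order.TTheory GRing.Theory Num.Theory.
Local Open Scope ring_scope.

(* Conventions:
   - the alphabet Sigma is a finType;
   - overline Sigma = option Sigma, with None = EOS;
   - underline Sigma = option Sigma, with None = BOS;
   - R^D is represented as functions 'I_D -> R;
   - positions of a string w (over underline Sigma) are 0 .. size w - 1
     internally; the static encoding receives the 1-based position j.+1. *)

Section Transformers.
Variable R : realType.

Definition vec (D : nat) := 'I_D -> R.

Definition vzero D : vec D := fun _ => 0.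
Arguments vzero D _ : clear implicits.
Definition vadd D (u v : vec D) : vec D := fun i => u i + v i.
Definition vscale D (c : R) (u : vec D) : vec D := fun i => c * u i.

Definition hardmax_weight (score : nat -> R) (s j : nat) : R :=
  let M := foldr Num.max (score 0%N) [seq score k | k <- iota 0 s.+1] in
  let A := [seq k <- iota 0 s.+1 | score k == M] in
  if j \in A then (size A)%:R^-1 else 0.

Record head (D : nat) := Head {
  hQ : vec D -> vec D;
  hK : vec D -> vec D;
  hV : vec D -> vec D;
  hO : vec D -> vec D;
  hf : vec D -> vec D -> R }.
Arguments hQ {D} h _.
Arguments hK {D} h _.
Arguments hV {D} h _.
Arguments hO {D} h _.
Arguments hf {D} h _ _.

Definition head_apply {D} (h : head D) (xs : seq (vec D)) : seq (vec D) :=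
  [seq
    (let xsv := nth (vzero D) xs s in
     let q := hQ h xsv in
     let score j := hf h q (hK h (nth (vzero D) xs j)) in
     let a := vadd D (\big[@vadd D/vzero D]_(j < s.+1)
                      vscale D (hardmax_weight score s j) (hV h (nth (vzero D) xs j)))
                   xsv in
     vadd D (hO h a) a)
  | s <- iota 0 (size xs)].

Record layer (D : nat) := Layer {
  lH : nat;
  lheads : 'I_lH -> head D;
  lcomb : ('I_lH -> vec D) -> vec D }.
Arguments lheads {D} l _.
Arguments lH {D} l.
Arguments lcomb {D} l _.

Definition layer_apply {D} (l : layer D) (xs : seq (vec D)) : seq (vec D) :=
  [seq lcomb l (fun h => nth (vzero D) (head_apply (lheads l h) xs) s)
  | s <- iota 0 (size xs)].

(* A hard attention transformer LM over Sigma: width tD, static encoding tr,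
   layers, final function tF : R^tD -> R^tD' and output matrix tE with rows
   indexed by overline Sigma and entries in \bar R (entries must not be +oo,
   see transformer_wf). *)
Record transformer (Sig : finType) := Transformer {
  tD : nat;
  tr : option Sig -> nat -> vec tD;
  tlayers : seq (layer tD);
  tD' : nat;
  tF : vec tD -> vec tD';
  tE : option Sig -> 'I_tD' -> \bar R }.
Arguments tr {Sig} t _ _.
Arguments tF {Sig} t _ _.
Arguments tE {Sig} t _ _.
Arguments tlayers {Sig} t.
Arguments tD {Sig} t.
Arguments tD' {Sig} t.

Variable Sig : finType.

Definition static_enc (T : transformer Sig) (w : seq (option Sig)) : seq (vec (tD T)) :=
  [seq tr T (nth None w j) j.+1 | j <- iota 0 (size w)].

Definition run_layers {D} (ls : seq (layer D)) (xs : seq (vec D)) : seq (vec D) :=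
  foldl (fun ys l => layer_apply l ys) xs ls.

Fixpoint all_reps {D} (ls : seq (layer D)) (xs : seq (vec D)) : seq (vec D) :=
  match ls with
  | [::] => xs
  | l :: ls' =>
      xs ++ flatten [seq head_apply (lheads l h) xs | h <- enum 'I_(lH l)]
         ++ all_reps ls' (layer_apply l xs)
  end.

Definition transformer_reps (T : transformer Sig) (w : seq (option Sig)) :=
  all_reps (tlayers T) (static_enc T w).

Definition final_rep (T : transformer Sig) (w : seq (option Sig)) : vec (tD' T) :=
  tF T (last (vzero _) (run_layers (tlayers T) (static_enc T w))).

Definition logit (T : transformer Sig) (w : seq (option Sig)) (a : option Sig) : \bar R :=
  (\sum_(j < tD' T) (tE T a j * (final_rep T w j)%:E))%E.

Definition expE (x : \bar R) : R := if x is (r%:E)%E then expR r else 0.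

Definition tcond (T : transformer Sig) (w : seq (option Sig)) (a : option Sig) : R :=
  expE (logit T w a) / \sum_(b : option Sig) expE (logit T w b).

Definition pad (n : nat) (y : seq Sig) : seq (option Sig) :=
  nseq n.-1 None ++ map Some y.

(* the transformer LM is well defined on every padded prefix: E has entries in
   R u {-oo}, the product E F(x^L) only involves -oo * c with c >= 0 (so it is
   meaningful with -oo * 0 = 0), and the softmax normalizer is positive. *)
Definition transformer_wf (T : transformer Sig) (n : nat) : Prop :=
  (forall a j, tE T a j != +oo%E) /\
  forall y : seq Sig,
    (forall a j, tE T a j = -oo%E -> 0 <= final_rep T (pad n y) j) /\
    0 < \sum_(b : option Sig) expE (logit T (pad n y) b).

Definition autoreg (cond : seq (option Sig) -> option Sig -> R) (n : nat)
  (y : seq Sig) : R :=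
  (\prod_(t < size y) cond (pad n (take t y)) (Some (tnth (in_tuple y) t)))
  * cond (pad n y) None.

Definition tprob (T : transformer Sig) (n : nat) (y : seq Sig) : R :=
  autoreg (tcond T) n y.

Definition ngram_params (n : nat) := (n.-1).-tuple (option Sig) -> option Sig -> R.

Definition is_ngram_lm {n} (ng : ngram_params n) : Prop :=
  (forall h a, 0 <= ng h a) /\ (forall h, \sum_(a : option Sig) ng h a = 1).

Definition history (n : nat) (w : seq (option Sig)) : (n.-1).-tuple (option Sig) :=
  [tuple nth None w (size w - n.-1 + i) | i < n.-1].

Definition ngprob {n} (ng : ngram_params n) (y : seq Sig) : R :=
  autoreg (fun w a => ng (history n w) a) n y.

End Transformers.

Arguments vzero {R} D _.
Arguments tD {R Sig} t.
Arguments tD' {R Sig} t.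
Arguments transformer_wf {R Sig} T n.
Arguments tprob {R Sig} T n y.
Arguments ngprob {R Sig n} ng y.
Arguments is_ngram_lm {R Sig n} ng.
Arguments transformer_reps {R Sig} T w.
Arguments pad {Sig} n y.
Arguments ngram_params R Sig n : clear implicits.
Arguments transformer R Sig : clear implicits.

Definition bits_repr {R : realType} (b : nat) (x : R) : Prop :=
  exists (p : int) (q : nat),
    (0 < q)%N /\ (absz p <= 2 ^ b)%N /\ (q <= 2 ^ b)%N /\ x = p%:~R / q%:R.

(* Main.v *)
Require Import Defs.
From HB Require Import structures.
From mathcomp Require Import all_boot all_order all_algebra.
From mathcomp Require Import reals constructive_ereal sequences exp.
From mathcomp Require Import zify ring lra.
Import Order.TTheory GRing.Theory Num.Theory.
Local Open Scope ring_scope.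

Section Constr.
Variable R : realType.
Variable Sig : finType.
Variable n : nat.
Variable ng : ngram_params R Sig n.

Definition code (b : option Sig) : nat := if b is Some s then (enum_rank s).+1 else 0.
Definition decode (r : R) : option Sig := odflt None [pick b : option Sig | (code b)%:R == r].

Definition DD := (3 + n.-1)%N.
Definition i0 : 'I_DD := @Ordinal DD 0 isT.
Definition i1 : 'I_DD := @Ordinal DD 1 isT.
Definition i2 : 'I_DD := @Ordinal DD 2 isT.

Definition staticf (b : option Sig) (j : nat) : vec R DD :=
  fun idx => if (idx:nat) == 0%N then (code b)%:R else if (idx:nat) == 1%N then j%:R else 0.

Definition dd (i : 'I_n.-1) : nat := (n.-1 - i.+1)%N.

Definition gout (a : vec R DD) : vec R DD := fun _ => (code (decode (a i2)))%:R.

Definition hd (i : 'I_n.-1) : Defs.head R DD :=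
  Defs.Head R DD (fun x => x) (fun x => x) (fun x => fun _ => x i0)
    (fun a => fun idx => gout a idx - a idx)
    (fun q k => if q i1 == k i1 + (dd i)%:R then 1 else 0).

Definition lcombf (zs : 'I_n.-1 -> vec R DD) : vec R DD :=
  fun idx => match (insub (val idx) : option 'I_n.-1) with Some k => zs k idx | None => 0 end.

Definition lay : layer R DD := Defs.Layer R DD n.-1 hd lcombf.

Definition TP := (option Sig + option Sig)%type.

Definition hdec (x : vec R DD) : (n.-1).-tuple (option Sig) :=
  [tuple decode (x (widen_ord (leq_addl 3 n.-1) i)) | i < n.-1].

Definition lnp (p : R) := if 0 < p then ln p else 0.

Definition Ff' (x : vec R DD) (y : TP) : R :=
  match y with
  | inl b => lnp (ng (hdec x) b)
  | inr b => if ng (hdec x) b == 0 then 1 else 0 end.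
Definition Ff (x : vec R DD) : vec R #|{: TP}| := fun j => Ff' x (enum_val j).

Definition Ef' (a : option Sig) (y : TP) : \bar R :=
  match y with
  | inl b => if b == a then 1%E else 0%E
  | inr b => if b == a then -oo%E else 0%E end.
Definition Ef (a : option Sig) (j : 'I_#|{: TP}|) : \bar R := Ef' a (enum_val j).

Definition TT : transformer R Sig := Defs.Transformer R Sig DD staticf [:: lay] #|{: TP}| Ff Ef.


Lemma nth_map_iota (T : Type) (x0 : T) (f : nat -> T) m k :
  (k < m)%N -> nth x0 [seq f j | j <- iota 0 m] k = f k.
Proof. by move=> h; rewrite (nth_map 0%N) ?size_iota // nth_iota. Qed.

Lemma hardmax_onehot (score : nat -> R) s j0 : (j0 <= s)%N ->
  (forall k, (k <= s)%N -> score k = if k == j0 then 1 else 0) ->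
  forall j, (j <= s)%N -> hardmax_weight R score s j = if j == j0 then 1 else 0.
Proof.
move=> hj0 hs j hj; rewrite /hardmax_weight.
have hM : foldr Num.max (score 0%N) [seq score k | k <- iota 0 s.+1] = 1.
  have le1 : forall l : seq nat, all (fun k => k <= s)%N l ->
      foldr Num.max (score 0%N) (map score l) <= 1.
    elim=> [|a l IH] /=; first by rewrite hs //; case: eqP.
    move/andP=> [ha hl]; rewrite ge_max (IH hl) andbT hs //; by case: eqP.
  have ge : forall l : seq nat, j0 \in l -> 1 <= foldr Num.max (score 0%N) (map score l).
    elim=> [|a l IH] //=; rewrite in_cons => /orP[/eqP<-|h].
      by rewrite le_max hs ?eqxx ?lexx.
    by rewrite le_max IH ?orbT.
  apply/le_anti; apply/andP; split.
    by apply: le1; apply/allP=> k; rewrite mem_iota add0n ltnS => /andP[_ ->].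
  by apply: ge; rewrite mem_iota add0n ltnS hj0.
rewrite hM.
have -> : [seq k <- iota 0 s.+1 | score k == 1] = [:: j0].
  rewrite -(filter_pred1_uniq (iota_uniq 0 s.+1) (_ : j0 \in iota 0 s.+1)); last by rewrite mem_iota.
  apply: eq_in_filter => k; rewrite mem_iota => /andP[_ hk]; rewrite hs //.
  rewrite /=; case: (k =P j0) => [_|hne]; first by rewrite eqxx.
  by rewrite eq_sym oner_eq0; apply/esym/negbTE/eqP.
case: (boolP (j == j0)) => hj'.
  by rewrite (eqP hj') mem_head /= invr1.
by rewrite ifF //; apply/negbTE; rewrite mem_seq1.
Qed.

Lemma bigvadd_app D m (F : 'I_m -> vec R D) i :
  (\big[@vadd R D/vzero D]_(j < m) F j) i = \sum_(j < m) F j i.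
Proof. by apply: (big_morph (fun v : vec R D => v i)). Qed.

Lemma size_static w : size (static_enc R Sig (TT) w) = size w.
Proof. by rewrite /static_enc size_map size_iota. Qed.

Lemma nth_static w j : (j < size w)%N ->
  nth (vzero _) (static_enc R Sig (TT) w) j = staticf (nth None w j) j.+1.
Proof. by move=> h; rewrite /static_enc nth_map_iota. Qed.

Lemma code_inj : injective code.
Proof.
case=> [a|] [b|] //= [] h; congr Some; exact: enum_rank_inj (val_inj h).
Qed.

Lemma decode_code b : decode (code b)%:R = b.
Proof.
rewrite /decode; case: pickP => [b' hb|/(_ b)]; last by rewrite eqxx.
by move: hb; rewrite eqr_nat => /eqP /code_inj ->.
Qed.

Lemma code_le b : (code b <= #|Sig|)%N.
Proof. by case: b => //= a; rewrite ltn_ord. Qed.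

Lemma staticf0 b j : staticf b j i0 = (code b)%:R. Proof. by []. Qed.
Lemma staticf1 b j : staticf b j i1 = j%:R. Proof. by []. Qed.
Lemma staticf2 b j : staticf b j i2 = 0. Proof. by []. Qed.

Lemma head_last w (i : 'I_n.-1) idx : (n.-1 <= size w)%N -> (0 < size w)%N ->
  nth (vzero _) (head_apply R (hd i) (static_enc R Sig TT w)) (size w).-1 idx
  = (code (nth None w (size w - n.-1 + i)))%:R.
Proof.
move=> hw hw0.
have hs : ((size w).-1 < size w)%N by rewrite prednK.
rewrite /head_apply size_static nth_map_iota //=.
rewrite (_ : forall a : vec R DD, vadd R DD (fun idx => gout a idx - a idx) a idx = gout a idx); last first.
  by move=> a; rewrite /vadd subrK.
rewrite /gout (_ : forall u v : vec R DD, vadd R DD u v i2 = u i2 + v i2) // bigvadd_app.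
set j0 := (size w - n.-1 + i)%N.
have hj0 : (j0 <= (size w).-1)%N by rewrite /j0; have := ltn_ord i; lia.
rewrite (eq_bigr (fun j : 'I_(size w).-1.+1 => if (j : nat) == j0 then
   nth (vzero DD) (static_enc R Sig TT w) j0 i0 else 0)); last first.
  move=> j _; rewrite /vscale (hardmax_onehot _ _ _ hj0); last by rewrite -ltnS ltn_ord.
    by case: eqP => [->|_]; rewrite ?mul1r ?mul0r.
  move=> k hk; rewrite !nth_static //; last by apply: leq_ltn_trans hk hs.
  rewrite !staticf1 -natrD eqr_nat /j0 /dd.
  have hi := ltn_ord i; congr (if _ then _ else _).
  by apply/idP/idP => /eqP h; apply/eqP; lia.
rewrite -big_mkcond (big_ord1_eq _ (fun _ : nat => nth (vzero DD) (static_enc R Sig TT w) j0 i0)) ltnS hj0.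
rewrite (@nth_static w (size w).-1 hs) staticf2 addr0 nth_static ?staticf0 ?decode_code //.
by rewrite /j0; have := ltn_ord i; lia.
Qed.

Lemma lastrep w : (n.-1 <= size w)%N -> (0 < size w)%N ->
  hdec (last (vzero _) (run_layers R [:: lay] (static_enc R Sig TT w))) = history Sig n w.
Proof.
move=> hw hw0.
have hs : ((size w).-1 < size w)%N by rewrite prednK.
rewrite /run_layers /= -nth_last /layer_apply size_map size_iota size_static.
rewrite nth_map_iota ?size_static //.
apply: eq_from_tnth => i; rewrite !tnth_mktuple /lcombf.
rewrite /lay /lcombf /= (_ : insub (val (widen_ord (leq_addl 3 n.-1) i)) = Some i); last exact: valK.
by rewrite head_last // decode_code.
Qed.

Lemma logit_val x a : (forall h b, 0 <= ng h b) ->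
  expE R (\sum_(j < #|{: TP}|) (Ef a j * (Ff x j)%:E))%E = ng (hdec x) a.
Proof.
move=> hpos.
rewrite (eq_bigr (fun j => (Ef' a (enum_val j) * (Ff' x (enum_val j))%:E)%E)) //.
rewrite -(big_enum_val (A := {: TP}) (fun y => (Ef' a y * (Ff' x y)%:E)%E)).
rewrite big_sumType /= (bigD1 a) //= [X in (_ + X)%E](bigD1 a) //=.
rewrite !eqxx big1; last by move=> b /negbTE ->; rewrite mul0e.
rewrite big1; last by move=> b /negbTE ->; rewrite mul0e.
have := hpos (hdec x) a; rewrite le_eqVlt => /orP[/eqP <-|hp].
  by rewrite eqxx mule1 addeNy.
rewrite (gt_eqF hp) mule0 adde0 /lnp hp /=.
by rewrite mul1r !addr0 lnK // posrE.
Qed.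

Definition Pv B (v : vec R DD) := forall i, exists c, (c <= B)%N /\ v i = c%:R.
Definition Pl B (s : seq (vec R DD)) := forall k, Pv B (nth (vzero DD) s k).

Lemma Pv0 B : Pv B (vzero DD).
Proof. by move=> i; exists 0%N. Qed.

Lemma Pl_cat B s1 s2 : Pl B s1 -> Pl B s2 -> Pl B (s1 ++ s2).
Proof. by move=> h1 h2 k; rewrite nth_cat; case: ifP. Qed.

Lemma Pl_flatten_map B (A : Type) (f : A -> seq (vec R DD)) (r : seq A) :
  (forall a, Pl B (f a)) -> Pl B (flatten (map f r)).
Proof.
move=> hf; elim: r => [|a r IH] /=; first by move=> k; rewrite nth_nil; exact: Pv0.
exact: Pl_cat.
Qed.

Lemma Pl_map_iota B m (f : nat -> vec R DD) :
  (forall j, (j < m)%N -> Pv B (f j)) -> Pl B [seq f j | j <- iota 0 m].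
Proof.
move=> hf k; case: (ltnP k m) => hk; first by rewrite nth_map_iota //; exact: hf.
by rewrite nth_default ?size_map ?size_iota //; exact: Pv0.
Qed.

Lemma Pl_head B i xs : (#|Sig| <= B)%N -> Pl B (head_apply R (hd i) xs).
Proof.
move=> hB; apply: Pl_map_iota => j _ idx.
eexists; split; last first.
  by rewrite /vadd /= subrK /gout; reflexivity.
exact: leq_trans (code_le _) hB.
Qed.

Lemma reps_bound w : Pl (#|Sig| + size w) (transformer_reps TT w).
Proof.
have hB : (#|Sig| <= #|Sig| + size w)%N by rewrite leq_addr.
rewrite /transformer_reps /=.
apply: Pl_cat; [|apply: Pl_cat].
- apply: Pl_map_iota => j hj idx; rewrite /= /staticf.
  case: ifP => _; first by exists (code (nth None w j)); split => //; exact: leq_trans (code_le _) hB.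
  case: ifP => _; first by exists j.+1; split => //; rewrite ltn_addl.
  by exists 0%N.
- apply: Pl_flatten_map => h; exact: Pl_head.
- rewrite /layer_apply; apply: Pl_map_iota => j _ idx; rewrite /= /lcombf.
  case: insub => [k|]; last by exists 0%N.
  exact: Pl_head.
Qed.

Lemma tcond_eq w a : is_ngram_lm ng ->
  tcond R Sig TT w a = ng (hdec (last (vzero _) (run_layers R [:: lay] (static_enc R Sig TT w)))) a.
Proof.
move=> [hpos hsum]; rewrite /tcond.
have e : forall b, expE R (logit R Sig TT w b) =
   ng (hdec (last (vzero _) (run_layers R [:: lay] (static_enc R Sig TT w)))) b.
  by move=> b; exact: logit_val.
by rewrite (eq_bigr _ (fun b _ => e b)) hsum divr1 e.
Qed.

Lemma sum_logit w : is_ngram_lm ng -> \sum_(b : option Sig) expE R (logit R Sig TT w b) = 1.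
Proof.
move=> [hpos hsum].
have e : forall b, expE R (logit R Sig TT w b) =
   ng (hdec (last (vzero _) (run_layers R [:: lay] (static_enc R Sig TT w)))) b.
  by move=> b; exact: logit_val.
by rewrite (eq_bigr _ (fun b _ => e b)) hsum.
Qed.

Lemma tcond_pad y a : is_ngram_lm ng -> (2 <= n)%N ->
  tcond R Sig TT (pad n y) a = ng (history Sig n (pad n y)) a.
Proof.
move=> hng hn; rewrite tcond_eq // lastrep // /pad size_cat size_nseq ?leq_addr //.
lia.
Qed.
End Constr.

Lemma bits_arith K m c : (0 < K)%N -> (c <= K + m)%N ->
  (c <= 2 ^ ((K + 2) * trunc_log 2 (m + 2)))%N.
Proof.
move=> hK hc.
set L := trunc_log 2 (m + 2).
have hL : (1 <= L)%N by apply: trunc_log_max => //; rewrite expn1 leq_addl.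
have h1 : (m + 2 <= 2 ^ (2 * L))%N.
  apply: leq_trans (ltnW (trunc_log_ltn (m + 2) (isT : (1 < 2)%N))) _.
  by apply: leq_pexp2l => //; rewrite /L; lia.
have h2 : (K <= 2 ^ (K * L))%N.
  apply: leq_trans (ltnW (ltn_expl K (isT : (1 < 2)%N))) _.
  by apply: leq_pexp2l => //; rewrite leq_pmulr.
have h3 : (c <= K * (m + 2))%N by nia.
apply: leq_trans h3 _; rewrite mulnDl expnD; exact: leq_mul.
Qed.

Theorem theorem5p1 (R : realType) :
  exists C : nat,
  forall (Sig : finType), (0 < #|Sig|)%N ->
  forall (n : nat), (2 <= n)%N ->
  forall (ng : ngram_params R Sig n), is_ngram_lm ng ->
  exists T : transformer R Sig,
    transformer_wf T n /\
    (tD T <= C * (n * #|Sig|))%N /\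
    (tD' T <= C * #|Sig| ^ n.-1)%N /\
    (forall y : seq Sig, tprob T n y = ngprob ng y) /\
    exists Cb : nat,
      forall (y : seq Sig) (t : nat), (t <= size y)%N ->
      forall (k : nat), (k < size (transformer_reps T (pad n (take t y))))%N ->
      forall i, exists b : nat,
        (b <= Cb * trunc_log 2 (size y + 2))%N /\
        bits_repr b (nth (vzero (tD T)) (transformer_reps T (pad n (take t y))) k i).
Proof.
exists 4%N => Sig hSig n hn ng hng.
exists (TT R Sig n ng); split; [|split; [|split; [|split]]].
- split.
    move=> a j; rewrite /= /Ef /Ef'; by case: enum_val => b; case: ifP.
  move=> y; split; last by rewrite sum_logit.
  move=> a j; rewrite /= /Ef /Ef' /final_rep /= /Ff /Ff'.
  by case: enum_val => b; case: eqP => // _ _; case: eqP.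
- rewrite /= /DD; apply: (@leq_trans (4 * n)%N); first lia.
  by rewrite leq_mul2l leq_pmulr.
- rewrite /= card_sum !card_option.
  have : (#|Sig| <= #|Sig| ^ n.-1)%N.
    have -> : n.-1 = (n.-2).+1 by lia.
    by rewrite expnS leq_pmulr // expn_gt0 hSig.
  move: (#|Sig| ^ n.-1)%N => e h; lia.
- move=> y; rewrite /tprob /ngprob /autoreg; congr (_ * _); last exact: tcond_pad.
  by apply: eq_bigr => t _; exact: tcond_pad.
- exists (#|Sig| + n + 2)%N => y t ht k hk i.
  have [c [hc ->]] := reps_bound R Sig n ng (pad n (take t y)) k i.
  exists ((#|Sig| + n + 2) * trunc_log 2 (size y + 2))%N; split => //.
  exists (c%:Z), 1%N; split => //; split; last split; last by rewrite divr1.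
    apply: (bits_arith (#|Sig| + n)); first by lia.
    move: hc; rewrite /pad size_cat size_nseq size_map size_takel //; lia.
  by rewrite expn_gt0.
Qed.
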